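(* Let $\epsilon\in(0,3/4]$, let $\mathcal{Y}=\sum_{k=1}^r\alpha_k\bigcirc_{\ell=1}^d\mathbf{y}^{(\ell)}_k\in\mathbb{C}^{n_1\times\cdots\times n_d}$ be a rank-$r$ tensor in standard form, and for each $j\in[d]$ let $\mathbf{A}_j\in\mathbb{C}^{m_j\times n_j}$ be an $(\epsilon/4d)$-JL embedding into $\mathbb{C}^{m_j}$ of the $2r^2-r$ vectors $$\mathcal{S}'_j:=\Big(\bigcup_{1\le h<k\le r}\{\mathbf{y}^{(j)}_k-\mathbf{y}^{(j)}_h,\ \mathbf{y}^{(j)}_k+\mathbf{y}^{(j)}_h,\ \mathbf{y}^{(j)}_k-\mathrm{i}\,\mathbf{y}^{(j)}_h,\ \mathbf{y}^{(j)}_k+\mathrm{i}\,\mathbf{y}^{(j)}_h\}\Big)\cup\{\mathbf{y}^{(j)}_k\}_{k\in[r]}\subset\mathbb{C}^{n_j}.$$ Then $$\big|\|\mathcal{Y}\|^2-\|\mathcal{Y}\times_1\mathbf{A}_1\cdots\times_d\mathbf{A}_d\|^2\big|\le\epsilon\Big(e+e^2\sqrt{r(r-1)}\max\big(\epsilon^{d-1},\mu_{\mathcal{Y}}^{d-1}\big)\Big)\|\boldsymbol\alpha\|_2^2\le\epsilon e^2(r+1)\|\boldsymbol\alpha\|_2^2 .$$ Furthermore, if $\mu_{\mathcal{Y}}=0$ then $$\big|\|\mathcal{Y}\|^2-\|\mathcal{Y}\times_1\mathbf{A}_1\cdots\times_d\mathbf{A}_d\|^2\big|\le\big(\epsilon+e\sqrt{r(r-1)}\,\epsilon^d\big)e\,\|\boldsymbol\alpha\|_2^2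 .$$
   Context: Tensors in $\mathbb{C}^{n_1\times\cdots\times n_d}$ have inner product $\langle\mathcal{X},\mathcal{Y}\rangle=\sum\mathcal{X}_{i_1\dots i_d}\overline{\mathcal{Y}_{i_1\dots i_d}}$ and norm $\|\cdot\|$; $\bigcirc$ is the outer product; the $j$-mode product is $(\mathcal{X}\times_j\mathbf{U})_{i_1,\dots,\ell,\dots,i_d}=\sum_{i_j}\mathcal{X}_{i_1,\dots,i_j,\dots,i_d}\mathbf{U}_{\ell,i_j}$; $\mathrm{i}$ is the imaginary unit and $e$ Euler's number. A matrix $\mathbf{A}$ is an $\epsilon$-JL embedding of a set $S$ if $\|\mathbf{A}x\|_2^2=(1+\epsilon_x)\|x\|_2^2$ with $\epsilon_x\in(-\epsilon,\epsilon)$ for all $x\in S$. Standard form: $\|\mathbf{y}^{(\ell)}_k\|_2=1$ for all $\ell,k$; $\boldsymbol\alpha=(\alpha_k)_{k\in[r]}$. The maximum modewise coherence (relative to this representation) is $\mu_{\mathcal{Y}}=\max_{\ell\in[d]}\max_{k\ne h}|\langle\mathbf{y}^{(\ell)}_k,\mathbf{y}^{(\ell)}_h\rangle|$. *)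

(* Defs.v *)
From HB Require Import structures.
From mathcomp Require Import all_boot all_order all_algebra.
From mathcomp Require Import complex.
From mathcomp Require Import reals sequences exp.
Set Implicit Arguments. Unset Strict Implicit. Unset Printing Implicit Defensive.
Import Order.TTheory GRing.Theory Num.Theory ComplexField.
Local Open Scope ring_scope.
Local Open Scope complex_scope.

Section Defs.
Variable R : realType.
Local Notation C := R[i].

Definition cabs2 (z : C) : R := (complex.Re z) ^+ 2 + (complex.Im z) ^+ 2.
Definition cabs (z : C) : R := Num.sqrt (cabs2 z).

Definition cinner n (x y : 'cV[C]_n) : C := \sum_(i < n) x i 0 * (y i 0)^*.
Definition cnorm2 n (x : 'cV[C]_n) : R := \sum_(i < n) cabs2 (x i 0).

Definition JL_embedding m n (eps : R) (A : 'M[C]_(m, n)) (S : pred 'cV[C]_n) :=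
  forall x, S x -> exists ex : R, - eps < ex < eps /\
     cnorm2 (A *m x) = (1 + ex) * cnorm2 x.

Definition multi_index d (n : 'I_d -> nat) := {dffun forall l : 'I_d, 'I_(n l)}.
Definition tensor d (n : 'I_d -> nat) := multi_index n -> C.

Definition tnorm2 d (n : 'I_d -> nat) (X : tensor n) : R :=
  \sum_(i : multi_index n) cabs2 (X i).

Definition cp_tensor d (n : 'I_d -> nat) r (alpha : 'I_r -> C)
  (y : forall l : 'I_d, 'I_r -> 'cV[C]_(n l)) : tensor n :=
  fun i => \sum_(k < r) alpha k * \prod_(l < d) y l k (i l) 0.

(* X x_1 A_1 x_2 A_2 ... x_d A_d  (all d mode products, written out):
   entry j = sum_i X_i prod_l (A_l)_{j_l, i_l} *)
Definition mode_products d (n m : 'I_d -> nat) (X : tensor n)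
  (A : forall l : 'I_d, 'M[C]_(m l, n l)) : tensor m :=
  fun j => \sum_(i : multi_index n) X i * \prod_(l < d) A l (j l) (i l).

Definition standard_form d (n : 'I_d -> nat) r
  (y : forall l : 'I_d, 'I_r -> 'cV[C]_(n l)) :=
  forall l k, cnorm2 (y l k) = 1.

(* maximum modewise coherence (0 if r <= 1) *)
Definition coherence d (n : 'I_d -> nat) r
  (y : forall l : 'I_d, 'I_r -> 'cV[C]_(n l)) : R :=
  \big[Num.max/0]_(l < d) \big[Num.max/0]_(k < r) \big[Num.max/0]_(h < r | h != k)
     cabs (cinner (y l k) (y l h)).

Definition Sprime d (n : 'I_d -> nat) r
  (y : forall l : 'I_d, 'I_r -> 'cV[C]_(n l)) (j : 'I_d) : pred 'cV[C]_(n j) :=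
  fun x => [exists h : 'I_r, exists k : 'I_r, (h < k)%N &&
             [|| x == y j k - y j h, x == y j k + y j h,
                 x == y j k - 'i *: y j h | x == y j k + 'i *: y j h]]
           || [exists k : 'I_r, x == y j k].

Definition alpha_norm2 r (alpha : 'I_r -> C) : R := \sum_(k < r) cabs2 (alpha k).

End Defs.
Arguments Sprime {R d n r} y j _.

(* Main.v *)
Require Import Defs.
From HB Require Import structures.
From mathcomp Require Import all_boot all_order all_algebra.
From mathcomp Require Import complex.
From mathcomp Require Import reals sequences exp ring lra.
Import Order.TTheory GRing.Theory Num.Theory ComplexField.
Local Open Scope complex_scope.
Local Open Scope ring_scope.
Lemma prod_sum_dffun (R : comNzRingType) (I : finType) (T_ : I -> finType)
  (F : forall i, T_ i -> R) :
  \prod_i \sum_(j : T_ i) F i j = \sum_(t : {dffun forall i, T_ i}) \prod_i F i (t i).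
Proof.
pose P_ := fun i => [ffun j : T_ i => F i j].
transitivity (\prod_i \sum_(j : T_ i) P_ i j).
  by apply: eq_bigr => i _; apply: eq_bigr => j _; rewrite ffunE.
under eq_bigr => i _ do rewrite (big_tag (fun i (j : T_ i) => P_ i j) i).
rewrite bigA_distr_big_dep.
rewrite -(@big_fprod _ 0 1 _ _ _ _ P_).
rewrite (reindex (@dffun_of_fprod _ T_)); last exact/onW_bij/dffun_of_fprod_bij.
apply: eq_bigr => t _; apply: eq_bigr => i _.
by rewrite /P_ !ffunE.
Qed.

Section S.
Variable R : realType.
Local Notation C := R[i].
Lemma cabs2E (z : R[i]) : (cabs2 z)%:C = z * z^*.
Proof. by rewrite /cabs2 add_Re2_Im2 normCK. Qed.
Lemma cnorm2E n (x : 'cV[R[i]]_n) : (cnorm2 x)%:C = cinner x x.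
Proof. rewrite /cnorm2 rmorph_sum; apply: eq_bigr => i _; exact: cabs2E. Qed.
Lemma tnorm2E d (n : 'I_d -> nat) (X : tensor R n) :
  (tnorm2 X)%:C = \sum_(i : multi_index n) X i * (X i)^*.
Proof. rewrite /tnorm2 rmorph_sum; apply: eq_bigr => i _; exact: cabs2E. Qed.

Lemma tnorm2_cp d (n : 'I_d -> nat) r (alpha : 'I_r -> C)
  (y : forall l : 'I_d, 'I_r -> 'cV[C]_(n l)) :
  (tnorm2 (cp_tensor alpha y))%:C =
  \sum_(k < r) \sum_(h < r) (alpha k * (alpha h)^* *
      \prod_(l < d) cinner (y l k) (y l h)).
Proof.
rewrite tnorm2E /cp_tensor.
transitivity (\sum_(i : multi_index n) \sum_(k < r) \sum_(h < r)
   (alpha k * (alpha h)^* * \prod_(l < d) (y l k (i l) 0 * (y l h (i l) 0)^*))).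
  apply: eq_bigr => i _; rewrite rmorph_sum big_distrl /=; apply: eq_bigr => k _.
  rewrite big_distrr /=; apply: eq_bigr => h _.
  rewrite rmorphM rmorph_prod /= big_split /=.
  by rewrite -!mulrA; congr (_ * _); rewrite mulrCA.
rewrite exchange_big /=; apply: eq_bigr => k _.
rewrite exchange_big /=; apply: eq_bigr => h _.
rewrite -big_distrr /=; congr (_ * _).
rewrite /cinner (@prod_sum_dffun C _ _ (fun l (j : 'I_(n l)) => y l k j 0 * (y l h j 0)^*)).
by [].
Qed.

Lemma mode_cp d (n m : 'I_d -> nat) r (alpha : 'I_r -> C)
  (y : forall l : 'I_d, 'I_r -> 'cV[C]_(n l))
  (A : forall l : 'I_d, 'M[C]_(m l, n l)) j :
  mode_products (cp_tensor alpha y) A j = cp_tensor alpha (fun l k => A l *m y l k) j.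
Proof.
rewrite /mode_products /cp_tensor.
under eq_bigr => i _ do rewrite big_distrl /=.
rewrite exchange_big /=; apply: eq_bigr => k _.
under eq_bigr => i _ do rewrite -mulrA -big_split /=.
rewrite -big_distrr /=; congr (_ * _).
rewrite -(@prod_sum_dffun C _ _ (fun l (t : 'I_(n l)) => y l k t 0 * A l (j l) t)).
apply: eq_bigr => l _; rewrite mxE; apply: eq_bigr => t _; exact: mulrC.
Qed.
Definition iC : C := Complex 0 1.
Lemma iCiC : iC * iC = -1.
Proof. by apply/eqP; rewrite eq_complex /= !mul0r !mulr0 !mulr1 add0r addr0 oppr0 !eqxx. Qed.
Lemma iCJ : iC^* = - iC.
Proof. by apply/eqP; rewrite eq_complex /= !oppr0 !eqxx. Qed.

Lemma polar1 n (u v : 'cV[C]_n) :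
  4%:R * cinner u v = cinner (u + v) (u + v) - cinner (u - v) (u - v)
    + iC * cinner (u + iC *: v) (u + iC *: v) - iC * cinner (u - iC *: v) (u - iC *: v).
Proof.
rewrite /cinner !big_distrr /= -!sumrN -!big_split /=; apply: eq_bigr => t _.
rewrite !mxE !rmorphD !rmorphN !rmorphM /= iCJ.
have h := iCiC. ring: h.
Qed.

Lemma polar2 n (u v : 'cV[C]_n) :
  cinner (u + v) (u + v) + cinner (u - v) (u - v)
    + cinner (u + iC *: v) (u + iC *: v) + cinner (u - iC *: v) (u - iC *: v)
  = 4%:R * (cinner u u + cinner v v).
Proof.
rewrite /cinner -!big_split /= big_distrr /=; apply: eq_bigr => t _.
rewrite !mxE !rmorphD !rmorphN !rmorphM /= iCJ.
have h := iCiC. ring: h.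
Qed.
Lemma normCR (x : R) : `|x%:C| = `|x|%:C.
Proof. by rewrite normc_def /= expr0n /= addr0 sqrtr_sqr. Qed.

Lemma cnorm2_ge0 n (x : 'cV[C]_n) : 0 <= cnorm2 x.
Proof. by apply: sumr_ge0 => i _; rewrite /cabs2 addr_ge0 // sqr_ge0. Qed.

Lemma normiC : `|iC| = 1.
Proof. by rewrite normc_def /= expr0n /= add0r expr1n sqrtr1. Qed.

Lemma jl_diff n m (M : 'M[C]_(m,n)) (x : 'cV[C]_n) (eta : R) :
  (exists ex : R, - eta < ex < eta /\ cnorm2 (M *m x) = (1 + ex) * cnorm2 x) ->
  `|cinner (M *m x) (M *m x) - cinner x x| <= eta%:C * cinner x x.
Proof.
case=> e [/andP [h1 h2] he]; rewrite -!cnorm2E he -rmorphB -rmorphM normCR lecR.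
have -> : (1 + e) * cnorm2 x - cnorm2 x = e * cnorm2 x by ring.
rewrite normrM (ger0_norm (cnorm2_ge0 _ x)); apply: ler_wpM2r; first exact: cnorm2_ge0.
by rewrite ler_norml !ltW // -ltrN2 opprK.
Qed.
Lemma inner_pert n m (M : 'M[C]_(m,n)) (u v : 'cV[C]_n) (eta : R) :
  cnorm2 u = 1 -> cnorm2 v = 1 ->
  (forall x, x \in [:: u + v; u - v; u + iC *: v; u - iC *: v] ->
     exists ex : R, - eta < ex < eta /\ cnorm2 (M *m x) = (1 + ex) * cnorm2 x) ->
  `|cinner (M *m u) (M *m v) - cinner u v| <= (2%:R * eta)%:C.
Proof.
move=> nu nv hJ.
have := hJ (u + v); rewrite !inE eqxx => /(_ isT) /jl_diff h1.
have := hJ (u - v); rewrite !inE eqxx !orbT => /(_ isT) /jl_diff h2.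
have := hJ (u + iC *: v); rewrite !inE eqxx !orbT => /(_ isT) /jl_diff h3.
have := hJ (u - iC *: v); rewrite !inE eqxx !orbT => /(_ isT) /jl_diff h4.
rewrite mulmxDr in h1; rewrite mulmxBr in h2; rewrite mulmxDr -scalemxAr in h3;
  rewrite mulmxBr -scalemxAr in h4.
have key : 4%:R * (cinner (M *m u) (M *m v) - cinner u v) =
  (cinner (M *m u + M *m v) (M *m u + M *m v) - cinner (u + v) (u + v))
  - (cinner (M *m u - M *m v) (M *m u - M *m v) - cinner (u - v) (u - v))
  + iC * (cinner (M *m u + iC *: (M *m v)) (M *m u + iC *: (M *m v)) - cinner (u + iC *: v) (u + iC *: v))
  - iC * (cinner (M *m u - iC *: (M *m v)) (M *m u - iC *: (M *m v)) - cinner (u - iC *: v) (u - iC *: v)).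
  rewrite mulrBr !polar1; ring.
have hs := polar2 _ u v.
rewrite -[cinner u u]cnorm2E -[cinner v v]cnorm2E nu nv in hs.
have : `|4%:R * (cinner (M *m u) (M *m v) - cinner u v)| <= (8%:R * eta)%:C.
  rewrite key.
  apply: (le_trans (ler_normD _ _)).
  apply: (le_trans (lerD (ler_normD _ _) (lexx _))).
  apply: (le_trans (lerD (lerD (ler_normD _ _) (lexx _)) (lexx _))).
  rewrite !normrN !normrM normiC !mul1r.
  apply: (le_trans (lerD (lerD (lerD h1 h2) h3) h4)).
  rewrite -!mulrDr hs rmorphM /= rmorphD /= rmorph1 mulrC.
rewrite le_eqVlt; apply/orP; left; apply/eqP; ring.
move=> h; rewrite normrM ger0_norm ?ler0n // in h.
have e8 : (8%:R * eta)%:C = 4%:R * (2%:R * eta)%:C.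
  by rewrite !rmorphM /= !rmorph_nat; ring.
by rewrite e8 ler_pM2l ?ltr0n // in h.
Qed.
End S.

Lemma prod_pert_seq (T : numDomainType) (I : Type) (s : seq I) (a b : I -> T) (B e : T) :
  0 <= B -> 0 <= e -> (forall i, `|b i| <= B) -> (forall i, `|a i - b i| <= e) ->
  `|\prod_(i <- s) a i| <= (B + e) ^+ size s /\
  `|\prod_(i <- s) a i - \prod_(i <- s) b i| <= (B + e) ^+ size s - B ^+ size s.
Proof.
move=> B0 e0 hb hab; elim: s => [|i s [IH1 IH2]].
  by rewrite !big_nil normr1 subrr normr0 !expr0.
have hai : `|a i| <= B + e.
  rewrite -(subrK (b i) (a i)); apply: le_trans (ler_normD _ _) _.
  by rewrite addrC lerD.
rewrite !big_cons /= !exprS; split.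
  by rewrite normrM ler_pM.
have -> : a i * \prod_(j <- s) a j - b i * \prod_(j <- s) b j =
   (a i - b i) * \prod_(j <- s) a j + b i * (\prod_(j <- s) a j - \prod_(j <- s) b j).
  by ring.
apply: le_trans (ler_normD _ _) _; rewrite !normrM.
apply: le_trans (lerD (ler_pM _ _ (hab i) IH1) (ler_pM _ _ (hb i) IH2)) _ => //.
by rewrite le_eqVlt; apply/orP; left; apply/eqP; ring.
Qed.

Lemma prod_pert (T : numDomainType) d (a b : 'I_d -> T) (B e : T) :
  0 <= B -> 0 <= e -> (forall i, `|b i| <= B) -> (forall i, `|a i - b i| <= e) ->
  `|\prod_(i < d) a i - \prod_(i < d) b i| <= (B + e) ^+ d - B ^+ d.
Proof.
move=> B0 e0 hb hab; have [_ h] := @prod_pert_seq T _ (index_enum 'I_d) a b B e B0 e0 hb hab.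
by move: h; rewrite [index_enum _]unlock -enumT -cardT card_ord.
Qed.

Section S2.
Variable R : realType.
Local Notation C := R[i].
Lemma cinnerC n (u v : 'cV[C]_n) : cinner v u = (cinner u v)^*.
Proof.
rewrite /cinner rmorph_sum; apply: eq_bigr => t _.
by rewrite rmorphM /= conjCK mulrC.
Qed.

Lemma cs_unit n (u v : 'cV[C]_n) : cnorm2 u = 1 -> cnorm2 v = 1 -> `|cinner u v| <= 1.
Proof.
move=> nu nv; set c := cinner u v.
have h0 : 0 <= cinner (u - c *: v) (u - c *: v) by rewrite -cnorm2E ler0c cnorm2_ge0.
have e1 : cinner (u - c *: v) (u - c *: v) =
   cinner u u - c^* * cinner u v - c * cinner v u + c * c^* * cinner v v.
  rewrite /cinner !big_distrr /= -!sumrN -!big_split /=; apply: eq_bigr => t _.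
  rewrite !mxE rmorphB rmorphM /=; ring.
rewrite e1 [cinner v u]cinnerC -/c -[cinner u u]cnorm2E -[cinner v v]cnorm2E nu nv /= rmorph1 !mulr1 in h0.
have : c * c^* <= 1.
  move: h0; have -> : 1 - c^* * c - c * c^* + c * c^* = 1 - c * c^* :> C by ring.
  by rewrite subr_ge0.
by rewrite -normCK expr_le1.
Qed.
End S2.

Section Num.
Variable R : realType.

Lemma powle (x y : R) n : 0 <= x -> x <= y -> x ^+ n <= y ^+ n.
Proof.
move=> x0 xy; apply: lerXn2r => //; rewrite ?nnegrE //; exact: le_trans xy.
Qed.

Lemma powdiff (x y : R) n : 0 <= y -> y <= x ->
  x ^+ n.+1 - y ^+ n.+1 <= n.+1%:R * (x - y) * x ^+ n.
Proof.
move=> y0 yx; have x0 : 0 <= x := le_trans y0 yx.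
elim: n => [|n IH]; first by rewrite !expr1 expr0 mul1r mulr1.
have -> : x ^+ n.+2 - y ^+ n.+2 = x * (x ^+ n.+1 - y ^+ n.+1) + (x - y) * y ^+ n.+1.
  by rewrite !exprS; ring.
have hb : (x - y) * y ^+ n.+1 <= (x - y) * x ^+ n.+1.
  by apply: ler_wpM2l; [rewrite subr_ge0 | exact: powle].
apply: le_trans (lerD (ler_wpM2l x0 IH) hb) _.
rewrite le_eqVlt; apply/orP; left; apply/eqP; rewrite !exprS -!natr1; ring.
Qed.

Lemma pow_exp (t : R) n : (0 < n)%N -> 0 <= t -> (1 + t / n%:R) ^+ n <= expR t.
Proof.
move=> n0 t0.
have h0 : 0 <= 1 + t / n%:R by rewrite addr_ge0 // divr_ge0.
apply: le_trans (powle _ _ n h0 (expR_ge1Dx (t / n%:R))) _.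
by rewrite -expRM_natl mulrC divfK // pnatr_eq0 -lt0n.
Qed.

Lemma e_ge1 : 1 <= expR (1 : R).
Proof. by apply: le_trans (expR_ge1Dx 1); rewrite lerDl ler01. Qed.

Lemma expR_le_e (t : R) : t <= 1 -> expR t <= expR 1.
Proof. by rewrite ler_expR. Qed.
End Num.

Section Num2.
Variable R : realType.
Variables (eps : R) (d' : nat).
Hypothesis eps0 : 0 < eps.
Hypothesis eps1 : eps <= 3 / 4.
Let d := d'.+1.
Let eta := 2%:R * (eps / (4%:R * d%:R)) : R.
Let e := expR (1 : R).

Lemma etaE : eta = (eps / 2%:R) / d%:R.
Proof. rewrite /eta; field; by rewrite pnatr_eq0. Qed.

Lemma eta_ge0 : 0 <= eta.
Proof. by rewrite etaE !divr_ge0 // ltW. Qed.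

Lemma deta : d%:R * eta = eps / 2%:R.
Proof. by rewrite etaE mulrC divfK // pnatr_eq0. Qed.

Lemma eta_le_eps : eta <= eps.
Proof.
rewrite etaE ler_pdivrMr ?ltr0n // ler_pdivrMr ?ltr0n //.
have hd : 1 <= d%:R :> R by rewrite ler1n.
have := eps0; nra.
Qed.

Lemma F1 : (1 + eta) ^+ d - 1 <= eps * e.
Proof.
have h := @powdiff R (1 + eta) 1 d' ler01.
rewrite expr1n in h.
apply: le_trans (h _) _; first by rewrite lerDl eta_ge0.
rewrite addrAC subrr add0r deta.
have h1 : (1 + eta) ^+ d' <= e.
  apply: le_trans (_ : (1 + eta) ^+ d <= e).
    by rewrite /d exprS ler_peMl ?exprn_ge0 ?addr_ge0 ?eta_ge0 // lerDl eta_ge0.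
  rewrite etaE; apply: le_trans (@pow_exp R (eps / 2) d isT _) _.
    by rewrite divr_ge0 // ltW.
  apply: expR_le_e; rewrite ler_pdivrMr ?ltr0n // mul1r; apply: le_trans eps1 _; lra.
have e1 := @e_ge1 R.
have he : 0 <= eps / 2 by rewrite divr_ge0 // ltW.
apply: le_trans (ler_wpM2l he h1) _.
rewrite ler_wpM2r //; first by apply: le_trans e1; rewrite ler01.
by rewrite ler_pdivrMr ?ltr0n //; lra.
Qed.

Lemma maxpow (a b : R) n : 0 <= a -> 0 <= b ->
  (Num.max a b) ^+ n = Num.max (a ^+ n) (b ^+ n).
Proof.
move=> a0 b0; case: (leP a b) => ab.
  by have -> : Num.max (a ^+ n) (b ^+ n) = b ^+ n by apply/max_idPr; apply: powle.
by have -> : Num.max (a ^+ n) (b ^+ n) = a ^+ n by apply/max_idPl; apply: powle => //; apply: ltW.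
Qed.

Lemma F2 (mu : R) : 0 <= mu ->
  (mu + eta) ^+ d - mu ^+ d <= eps * e * Num.max (eps ^+ d') (mu ^+ d').
Proof.
move=> mu0.
have h := @powdiff R (mu + eta) mu d' mu0.
apply: le_trans (h _) _; first by rewrite lerDl eta_ge0.
rewrite addrAC subrr add0r deta.
set M := Num.max eps mu.
have M0 : 0 <= M by rewrite le_max ltW.
have hM : mu + eta <= M * (1 + (1 / 2) / d%:R).
  rewrite mulrDr mulr1 lerD ?le_max ?lexx ?orbT //.
  rewrite etaE mulrA ler_wpM2r ?invr_ge0 ?ler0n // mul1r ler_wpM2r ?invr_ge0 ?ler0n //.
  by rewrite le_max lexx.
have h1 : (mu + eta) ^+ d' <= M ^+ d' * e.
  have hm0 : 0 <= mu + eta by rewrite addr_ge0 ?eta_ge0.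
  apply: le_trans (powle _ _ _ d' hm0 hM) _.
  rewrite exprMn ler_wpM2l ?exprn_ge0 //.
  have g1 : 1 <= 1 + 1 / 2 / d%:R :> R by rewrite lerDl !divr_ge0 ?ler0n.
  apply: le_trans (_ : (1 + 1 / 2 / d%:R) ^+ d <= e).
    by rewrite /d exprS ler_peMl ?exprn_ge0 // (le_trans ler01 g1).
  have h12 : 0 <= 1 / 2 :> R by rewrite divr_ge0 ?ler0n.
  apply: le_trans (@pow_exp R (1 / 2) d isT h12) _.
  by apply: expR_le_e; rewrite ler_pdivrMr ?ltr0n //; lra.
have e1 := @e_ge1 R.
have he : 0 <= eps / 2 by rewrite divr_ge0 // ltW.
apply: le_trans (ler_wpM2l he h1) _.
rewrite -(maxpow _ _ d' (ltW eps0) mu0) -/M.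
have hMd : 0 <= M ^+ d' by rewrite exprn_ge0.
have e0 : 0 <= e by apply: le_trans e1; rewrite ler01.
have -> : eps / 2 * (M ^+ d' * e) = (eps * e * M ^+ d') / 2 by field.
rewrite ler_pdivrMr ?ltr0n // ler_peMr // ?ler1n ?mulr_ge0 // ltW //.
Qed.

Lemma F3 : eta ^+ d <= eps ^+ d.
Proof. exact: powle eta_ge0 eta_le_eps. Qed.
End Num2.

Section Sums.
Variable R : realType.
Lemma sum_offdiag r (a : 'I_r -> R) :
  \sum_k \sum_(h | h != k) a k * a h <= (r%:R - 1) * \sum_k a k ^+ 2.
Proof.
have e1 : \sum_k \sum_(h | h != k) a k * a h = (\sum_k a k) ^+ 2 - \sum_k a k ^+ 2.
  rewrite expr2 big_distrl /= -sumrB; apply: eq_bigr => k _.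
  by rewrite big_distrr /= [in RHS](bigD1 k) //= expr2 addrAC subrr add0r.
have cs : 0 <= \sum_(k < r) \sum_(h < r) (a k - a h) ^+ 2.
  by apply: sumr_ge0 => k _; apply: sumr_ge0 => h _; exact: sqr_ge0.
have e2 : \sum_(k < r) \sum_(h < r) (a k - a h) ^+ 2 =
   2 * (r%:R * \sum_k a k ^+ 2 - (\sum_k a k) ^+ 2).
  transitivity (\sum_(k < r) (r%:R * a k ^+ 2 + \sum_h a h ^+ 2 - 2 * a k * \sum_h a h)).
    apply: eq_bigr => k _.
    transitivity (\sum_(h < r) (a k ^+ 2 + a h ^+ 2 - 2 * a k * a h)).
      by apply: eq_bigr => h _; ring.
    by rewrite sumrB big_split /= sumr_const card_ord -[_ *+ r]mulr_natl -big_distrr.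
  rewrite sumrB big_split /= sumr_const card_ord -mulr_natl -big_distrr /= -big_distrl /=.
  rewrite -big_distrr /=; ring.
rewrite e1; move: cs; rewrite e2 pmulr_rge0 ?ltr0n // subr_ge0 => cs.
rewrite mulrBl mul1r lerD2r //.
Qed.
End Sums.

Section Coh.
Variable R : realType.
Local Notation C := R[i].

Lemma normC_cabs (z : C) : `|z| = (cabs z)%:C.
Proof. by rewrite normc_def. Qed.

Lemma realCB (a b : R) : (a - b)%:C = a%:C - b%:C.
Proof. by rewrite rmorphB. Qed.
Lemma realCM (a b : R) : (a * b)%:C = a%:C * b%:C.
Proof. by rewrite rmorphM. Qed.

Lemma cabs_ge0 (z : C) : 0 <= cabs z.
Proof. exact: sqrtr_ge0. Qed.

Lemma cabs_sqr (z : C) : cabs z ^+ 2 = cabs2 z.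
Proof. by rewrite sqr_sqrtr // /cabs2 addr_ge0 // sqr_ge0. Qed.

Lemma coh_ge0 d (n : 'I_d -> nat) r (y : forall l : 'I_d, 'I_r -> 'cV[C]_(n l)) :
  0 <= coherence y.
Proof. exact: bigmax_ge_id. Qed.

Lemma coh_le d (n : 'I_d -> nat) r (y : forall l : 'I_d, 'I_r -> 'cV[C]_(n l)) l k h :
  h != k -> cabs (cinner (y l k) (y l h)) <= coherence y.
Proof.
move=> hk; rewrite /coherence.
apply: le_trans (le_bigmax _ _ l).
apply: le_trans (le_bigmax _ _ k).
exact: le_bigmax_cond.
Qed.

Lemma coh_le1 d (n : 'I_d -> nat) r (y : forall l : 'I_d, 'I_r -> 'cV[C]_(n l)) :
  standard_form y -> coherence y <= 1.
Proof.
move=> sf; rewrite /coherence.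
apply: bigmax_le => // l _; apply: bigmax_le => // k _; apply: bigmax_le => // h _.
by rewrite -lecR -normC_cabs rmorph1; apply: cs_unit.
Qed.
End Coh.

Theorem theorem4 (R : realType) (d : nat) (n m : 'I_d -> nat) (r : nat)
  (eps : R) (alpha : 'I_r -> R[i])
  (y : forall l : 'I_d, 'I_r -> 'cV[R[i]]_(n l))
  (A : forall l : 'I_d, 'M[R[i]]_(m l, n l)) :
  (0 < d)%N ->
  0 < eps <= 3 / 4 ->
  standard_form y ->
  (forall j : 'I_d, JL_embedding (eps / (4 * d%:R)) (A j) (Sprime y j)) ->
  let Y := cp_tensor alpha y in
  let err := `| tnorm2 Y - tnorm2 (mode_products Y A) | in
  let mu := coherence y in
  let e := expR (1 : R) in
  let bound := eps * (e + e ^+ 2 * Num.sqrt (r%:R * (r%:R - 1))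
                            * Num.max (eps ^+ d.-1) (mu ^+ d.-1)) * alpha_norm2 alpha in
  [/\ err <= bound,
      bound <= eps * e ^+ 2 * (r%:R + 1) * alpha_norm2 alpha
    & mu = 0 -> err <= (eps + e * Num.sqrt (r%:R * (r%:R - 1)) * eps ^+ d) * e
                        * alpha_norm2 alpha].
Proof.
move=> d0 /andP[eps0 eps1] sf hJL Y err mu e bound.
pose eta := 2%:R * (eps / (4 * d%:R)).
have eta0 : 0 <= eta.
  apply: mulr_ge0; first by []. apply: divr_ge0; first exact: ltW. by apply: mulr_ge0.
have K3 : forall (l : 'I_d) (k h : 'I_r), `|cinner (A l *m y l k) (A l *m y l h) - cinner (y l k) (y l h)| <= eta%:C.
  have side : forall (l : 'I_d) (k h : 'I_r), (h < k)%N ->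
     `|cinner (A l *m y l k) (A l *m y l h) - cinner (y l k) (y l h)| <= eta%:C.
    move=> l k h hk; apply: (@inner_pert R _ _ (A l) (y l k) (y l h) _ (sf l k) (sf l h)) => x hx.
    apply: hJL; apply/orP; left; apply/existsP; exists h; apply/existsP; exists k.
    rewrite hk /=; move: hx; rewrite !inE.
    by case/or4P => /eqP ->; rewrite eqxx ?orbT.
  move=> l k h; case: (ltngtP h k) => hk; first exact: side.
    rewrite cinnerC [cinner (y l k) _]cinnerC -rmorphB norm_conjC; exact: side.
  have -> : h = k by apply: val_inj.
  have hx : Sprime y l (y l k) by apply/orP; right; apply/existsP; exists k.
  apply: le_trans (@jl_diff R _ _ (A l) (y l k) _ (hJL l (y l k) hx)) _.
  rewrite -cnorm2E sf rmorph1 mulr1 lecR /eta.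
  have q0 : 0 <= eps / (4 * d%:R) by apply: divr_ge0; [exact: ltW | apply: mulr_ge0].
  by apply: ler_peMl => //; rewrite ler1n.
have K4a : forall (l : 'I_d) (k : 'I_r), cinner (y l k) (y l k) = 1.
  by move=> l k; rewrite -cnorm2E sf rmorph1.
have mu0 : 0 <= mu := @coh_ge0 R _ _ _ y.
have K4b : forall (l : 'I_d) (k h : 'I_r), h != k -> `|cinner (y l k) (y l h)| <= mu%:C.
  by move=> l k h hk; rewrite normC_cabs lecR; apply: (@coh_le R).
pose D := (1 + eta) ^+ d - 1.
pose O := (mu + eta) ^+ d - mu ^+ d.
pose g := fun k h : 'I_r => if k == h then D else O.
have Kg : forall k h : 'I_r,
   `|\prod_(l < d) cinner (A l *m y l k) (A l *m y l h) - \prod_(l < d) cinner (y l k) (y l h)|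
     <= (g k h)%:C.
  move=> k h; rewrite /g; case: eqP => [<-|hk].
    have := @prod_pert _ d (fun l => cinner (A l *m y l k) (A l *m y l k))
       (fun l => cinner (y l k) (y l k)) 1 eta%:C ler01 _ _ (fun l => K3 l k k).
    rewrite ler0c => /(_ eta0); rewrite /D rmorphB rmorphXn rmorphD rmorph1 expr1n; apply.
    by move=> l; rewrite K4a normr1.
  have hk' : h != k by rewrite eq_sym; apply/eqP.
  have := @prod_pert _ d (fun l => cinner (A l *m y l k) (A l *m y l h))
     (fun l => cinner (y l k) (y l h)) mu%:C eta%:C _ _ (fun l => K4b l k h hk') (fun l => K3 l k h).
  rewrite /O rmorphB !rmorphXn rmorphD; apply; by rewrite ler0c.
pose ca := fun k => cabs (alpha k).
have err_le : err <= \sum_k \sum_h ca k * ca h * g k h.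
  rewrite -lecR /err -normCR realCB.
  have -> : tnorm2 (mode_products Y A) = tnorm2 (cp_tensor alpha (fun l k => A l *m y l k)).
    by apply: eq_bigr => i _; rewrite /Y mode_cp.
  rewrite /Y !tnorm2_cp -sumrB rmorph_sum.
  apply: le_trans (ler_norm_sum _ _ _) _; apply: ler_sum => k _.
  rewrite -sumrB rmorph_sum.
  apply: le_trans (ler_norm_sum _ _ _) _; apply: ler_sum => h _.
  rewrite -mulrBr normrM normrM norm_conjC distrC !normC_cabs !rmorphM.
  apply: ler_wpM2l; [rewrite -rmorphM ler0c mulr_ge0 ?cabs_ge0 // | ].
  by rewrite -normC_cabs; exact: Kg.
pose S := alpha_norm2 alpha.
have S0 : 0 <= S by apply: sumr_ge0 => k _; rewrite /cabs2 addr_ge0 ?sqr_ge0.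
have SE : S = \sum_k ca k ^+ 2 by apply: eq_bigr => k _; rewrite /ca cabs_sqr.
have O0 : 0 <= O by rewrite /O subr_ge0; apply: powle => //; rewrite lerDl.
have GE : \sum_k \sum_h ca k * ca h * g k h =
   D * S + O * \sum_k \sum_(h | h != k) ca k * ca h.
  rewrite SE big_distrr big_distrr -big_split /=; apply: eq_bigr => k _.
  rewrite (bigD1 k) //= /g eqxx big_distrr /=; congr (_ + _).
    by rewrite expr2 mulrC.
  by apply: eq_bigr => h hk; rewrite eq_sym (negbTE hk) mulrC.
have err_le2 : err <= D * S + O * ((r%:R - 1) * S).
  apply: le_trans err_le _; rewrite GE lerD2l; apply: ler_wpM2l => //.
  by rewrite SE; apply: sum_offdiag.
have hD : D <= eps * e.
  have := @F1 R eps d.-1 eps0 eps1; rewrite prednK //.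
have hO : O <= eps * e * Num.max (eps ^+ d.-1) (mu ^+ d.-1).
  have := @F2 R eps d.-1 eps0 mu mu0; rewrite prednK //.
have hO3 : mu = 0 -> O <= eps ^+ d.
  move=> m0; have := @F3 R eps d.-1 eps0; rewrite prednK // /O m0 expr0n /=.
  by rewrite add0r (negbTE (lt0n_neq0 d0)) subr0.
set sq := Num.sqrt (r%:R * (r%:R - 1)).
have sq0 : 0 <= sq := sqrtr_ge0 _.
have hsqg : forall k : nat, k%:R - 1 <= Num.sqrt (k%:R * (k%:R - 1)) :> R.
  case => [|r'].
    by rewrite sub0r (le_trans _ (sqrtr_ge0 _)) // oppr_le0 ler01.
  have hk0 : 0 <= r'.+1%:R - 1 :> R by rewrite subr_ge0 ler1n.
  rewrite -{1}(ger0_norm hk0) -sqrtr_sqr.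
  rewrite ler_sqrt ?mulr_ge0 ?subr_ge0 ?ler1n // expr2 ler_wpM2r ?subr_ge0 ?ler1n //.
  by rewrite lerBlDr lerDl.
have hsq : r%:R - 1 <= sq := hsqg r.
have e1 : 1 <= e := @e_ge1 R.
have e0 : 0 <= e := le_trans ler01 e1.
have ee : e <= e ^+ 2 by rewrite expr2 ler_peMl.
set Mx := Num.max (eps ^+ d.-1) (mu ^+ d.-1).
have Mx0 : 0 <= Mx by rewrite le_max exprn_ge0 // ltW.
have epsge0 : 0 <= eps := ltW eps0.
have sqS : 0 <= sq * S := mulr_ge0 sq0 S0.
split.
- apply: le_trans err_le2 _.
  have t1 : D * S <= eps * e * S := ler_wpM2r S0 hD.
  have t2 : O * ((r%:R - 1) * S) <= O * (sq * S) := ler_wpM2l O0 (ler_wpM2r S0 hsq).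
  have t3 : O * (sq * S) <= eps * e * Mx * (sq * S) := ler_wpM2r sqS hO.
  have t4 : eps * e * Mx * (sq * S) <= eps * e ^+ 2 * sq * Mx * S.
    have -> : eps * e * Mx * (sq * S) = (eps * Mx * sq * S) * e by ring.
    have -> : eps * e ^+ 2 * sq * Mx * S = (eps * Mx * sq * S) * e ^+ 2 by ring.
    by apply: ler_wpM2l => //; rewrite !mulr_ge0.
  apply: le_trans (lerD t1 (le_trans t2 (le_trans t3 t4))) _.
  by rewrite /bound -/sq -/Mx -/S le_eqVlt; apply/orP; left; apply/eqP; ring.
- have Mx1 : Mx <= 1.
    have eps_le1 : eps <= 1 by apply: le_trans eps1 _; lra.
    have mu1 : mu <= 1 := @coh_le1 R _ _ _ y sf.
    by rewrite ge_max !exprn_ile1.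
  have sqr : sq <= r%:R.
    have r0 : 0 <= r%:R :> R := ler0n _ _.
    rewrite -(ger0_norm r0) -sqrtr_sqr /sq ler_sqrt ?sqr_ge0 // expr2.
    by rewrite ler_wpM2l // lerBlDr lerDl.
  have h1 : e + e ^+ 2 * sq * Mx <= e ^+ 2 * (r%:R + 1).
    rewrite mulrDr mulr1 addrC lerD //.
    rewrite -mulrA ler_wpM2l ?exprn_ge0 //.
    by apply: le_trans (_ : sq * 1 <= _); [rewrite ler_wpM2l | rewrite mulr1].
  rewrite /bound -/sq -/Mx -/S.
  have -> : eps * e ^+ 2 * (r%:R + 1) * S = eps * (e ^+ 2 * (r%:R + 1)) * S by ring.
  by rewrite ler_wpM2r // ler_wpM2l.
- move=> m0; apply: le_trans err_le2 _.
  have t1 : D * S <= eps * e * S := ler_wpM2r S0 hD.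
  have t2 : O * ((r%:R - 1) * S) <= O * (sq * S) := ler_wpM2l O0 (ler_wpM2r S0 hsq).
  have t3 : O * (sq * S) <= eps ^+ d * (sq * S) := ler_wpM2r sqS (hO3 m0).
  have t4 : eps ^+ d * (sq * S) <= e ^+ 2 * sq * eps ^+ d * S.
    have -> : eps ^+ d * (sq * S) = (eps ^+ d * sq * S) * 1 by ring.
    have -> : e ^+ 2 * sq * eps ^+ d * S = (eps ^+ d * sq * S) * e ^+ 2 by ring.
    apply: ler_wpM2l; first by rewrite !mulr_ge0 ?exprn_ge0.
    exact: le_trans e1 ee.
  apply: le_trans (lerD t1 (le_trans t2 (le_trans t3 t4))) _.
  by rewrite -/sq -/S le_eqVlt; apply/orP; left; apply/eqP; ring.
Qed.
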